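(* Given distributions $F_S,F_B$, let $p^*:=\inf\{p:\mathbb{P}[S\ge p]\le 1/5\}$. If $\mathbb{P}[B\le p^*]\le 1/5$, then $\mathsf{W}(p^*;F_S,F_B)\ge\frac{17}{25}\,\mathsf{OPT\text{-}W}(F_S,F_B)$.
   Context: Asymmetric bilateral trade: $S\sim F_S$, $B\sim F_B$ independent, distributions on $[0,\infty)$ with finite means. Posting price $p$, trade iff $B>p\ge S$. $\mathsf{W}(p;F_S,F_B)=\mathbb{E}[S+(B-S)\mathbf 1_{B>p\ge S}]$, $\mathsf{OPT\text{-}W}(F_S,F_B)=\mathbb{E}[\max\{B,S\}]$. *)

(* Defs.v *)
From HB Require Import structures.
From mathcomp Require Import all_boot all_order all_algebra.
From mathcomp Require Import all_classical all_reals all_analysis.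
Set Implicit Arguments. Unset Strict Implicit. Unset Printing Implicit Defensive.
Import Order.TTheory GRing.Theory Num.Theory.
Local Open Scope classical_set_scope.
Local Open Scope ring_scope.

(* Independent S ~ FS, B ~ FB : the joint law is the product measure FS \x FB
   on R * R, with first coordinate S (seller) and second coordinate B (buyer). *)

Definition W (R : realType) (FS FB : probability R R) (p : R) : \bar R :=
  (\int[FS \x FB]_(x in [set: R * R])
     (x.1 + (x.2 - x.1) * ((p < x.2) && (x.1 <= p))%:R)%:E)%E.

Definition OPTW (R : realType) (FS FB : probability R R) : \bar R :=
  (\int[FS \x FB]_(x in [set: R * R]) (Num.max x.2 x.1)%:E)%E.

Definition pstar (R : realType) (FS : probability R R) : R :=
  inf [set p : R | (FS `[p, +oo[%classic <= (1 / 5 : R)%:E)%E].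

Definition nonneg_finite_mean (R : realType) (F : probability R R) : Prop :=
  F `]-oo, 0[%classic = 0%E /\ F.-integrable [set: R] (fun x => x%:E).

(* Main.v *)
Require Import Defs.
From HB Require Import structures.
From mathcomp Require Import all_boot all_order all_algebra.
From mathcomp Require Import all_classical all_reals all_analysis.
From mathcomp Require Import measurable_realfun.
Import Order.TTheory GRing.Theory Num.Theory.
Local Open Scope classical_set_scope.
Local Open Scope ring_scope.
From mathcomp Require Import lra.
Lemma indI1 (R : realType) (p x : R) : \1_(`]-oo, p]%classic) x = if x <= p then 1 else 0 :> R.
Proof.
rewrite indicE; have [h|h] := leP x p.
  by rewrite mem_set //= in_itv /= h.
by rewrite memNset //= in_itv /= leNgt h.
Qed.
Lemma indI2 (R : realType) (p x : R) : \1_(`]p, +oo[%classic) x = if p < x then 1 else 0 :> R.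
Proof.
rewrite indicE; have [h|h] := ltP p x.
  by rewrite mem_set //= in_itv /= h.
by rewrite memNset //= in_itv /= ltNge h.
Qed.
Lemma identW (R : realType) (s b p : R) : 0 <= s ->
  s + (b - s) * ((p < b) && (s <= p))%:R =
  Num.max s 0 * 1 + \1_(`]-oo, p]%classic) s * Num.max (b - p) 0
  + Num.max (p - s) 0 * \1_(`]p, +oo[%classic) b.
Proof.
move=> s0.
have e1 : Num.max (b-p) 0 = if p < b then b-p else 0.
  by case: ltP => h; [apply/max_idPl; lra | apply/max_idPr; lra].
have e2 : Num.max (p-s) 0 = if s <= p then p - s else 0.
  by case: leP => h; [apply/max_idPl; lra | apply/max_idPr; lra].
rewrite e1 e2 indI1 indI2 (max_idPl s0).
by case: leP => h1; case: ltP => h2 /=; lra.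
Qed.
Lemma identO (R : realType) (s b p : R) :
  Num.max b (Num.max s 0) <= Num.max s 0 * 1 + 1 * Num.max (b - p) 0
  + Num.max (p - s) 0 * 1.
Proof.
have h1 := le_max (b - p) (b - p) 0. have h2 := le_max 0 (b - p) 0.
have h3 := le_max (p - s) (p - s) 0. have h4 := le_max 0 (p - s) 0.
have h5 := le_max s s 0. have h6 := le_max 0 s 0.
rewrite lexx /= in h1 h3 h5; rewrite lexx orbT in h2 h4 h6.
rewrite ge_max; apply/andP; split; lra.
Qed.
Lemma prod_sep (R : realType) (FS FB : probability R R) (g h : R -> R) :
  measurable_fun setT g -> measurable_fun setT h ->
  (forall x, 0 <= g x) -> (forall y, 0 <= h y) ->
  (\int[FS \x FB]_(z in setT) (g z.1 * h z.2)%:E =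
   (\int[FS]_(x in setT) (g x)%:E) * (\int[FB]_(y in setT) (h y)%:E))%E.
Proof.
move=> mg mh g0 h0.
rewrite (fubini_tonelli1 (fun z => (g z.1 * h z.2)%:E)) /=; last 2 first.
- apply/measurable_EFinP; apply: measurable_funM.
  + exact: measurableT_comp mg measurable_fst.
  + exact: measurableT_comp mh measurable_snd.
- by move=> z; rewrite lee_fin mulr_ge0.
rewrite /fubini_F /=.
transitivity (\int[FS]_(x in setT) ((g x)%:E * \int[FB]_(y in setT) (h y)%:E))%E.
  apply: eq_integral => x _; rewrite -ge0_integralZl_EFin //.
  - by move=> y _; rewrite lee_fin.
  - exact/measurable_EFinP.
rewrite ge0_integralZr //.
- exact/measurable_EFinP.
- by move=> x _; rewrite lee_fin.
- by apply: integral_ge0 => y _; rewrite lee_fin.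
Qed.
Lemma pstar_E_nonempty (R : realType) (FS : probability R R) :
  [set p : R | (FS `[p, +oo[%classic <= (1 / 5 : R)%:E)%E] !=set0.
Proof.
pose A n := `[n%:R, +oo[%classic : set R.
have mA n : measurable (A n) by exact: measurable_itv.
have niA : nonincreasing_seq A.
  move=> m n mn; apply/subsetPset => x; rewrite /A /= !in_itv /= !andbT => H.
  by apply: le_trans H; rewrite ler_nat.
have cap0 : \bigcap_n A n = set0.
  apply/seteqP; split => // x Hx; have := Hx (Num.truncn x).+1 I.
  by rewrite /A /= in_itv /= andbT leNgt truncnS_gt.
have h1 := nonincreasing_cvg_mu (mu:=FS) (F:=A) _ mA _ niA.
rewrite cap0 measure0 in h1.
have h2 := ereal_nonincreasing_cvgn (u_ := FS \o A) _.
have ni' : nonincreasing_seq (FS \o A).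
  by move=> m n mn; apply: le_measure; rewrite ?inE //; exact/subsetPset/niA.
have h1' := h1 (le_lt_trans (probability_le1 _ (mA 0%N)) (ltey _)) measurable0.
have e : (0 = ereal_inf (range (FS \o A)))%E := cvg_unique (@ereal_hausdorff R) h1' (h2 ni').
have Hlt : (ereal_inf (range (FS \o A)) < (1/5 : R)%:E)%E.
  rewrite -e; have h0 : ((0:R) < 1/5)%R by rewrite divr_gt0.
  by move: h0; rewrite -lte_fin.
have [_ [n _ <-] Hn] := ereal_inf_lt Hlt.
by exists n%:R; apply/ltW.
Qed.

Lemma pstar_gt (R : realType) (FS : probability R R) :
  (FS `]pstar FS, +oo[%classic <= (1 / 5 : R)%:E)%E.
Proof.
have E0 := @pstar_E_nonempty R FS.
set p := pstar FS.
pose F n := `[p + (n.+1%:R)^-1, +oo[%classic : set R.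
have mF n : measurable (F n) by exact: measurable_itv.
have ndF : nondecreasing_seq F.
  move=> m n mn; apply/subsetPset => x; rewrite /F /= !in_itv /= !andbT.
  apply: le_trans; rewrite lerD2l lef_pV2 ?posrE ?ltr0n// ler_nat.
  by [].
have cup : \bigcup_n F n = `]p, +oo[%classic.
  apply/seteqP; split => x.
    case=> n _; rewrite /F /= !in_itv /= !andbT; apply: lt_le_trans.
    by rewrite ltrDl invr_gt0 ltr0n.
  rewrite /= in_itv /= andbT => px.
  exists (Num.truncn (x - p)^-1) => //.
  rewrite /F /= in_itv /= andbT -lerBrDl.
  rewrite -[leRHS]invrK lef_pV2 ?posrE ?ltr0n ?invr_gt0 ?subr_gt0 //.
  exact/ltW/truncnS_gt.
have Fle n : (FS (F n) <= (1 / 5 : R)%:E)%E.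
  have := inf_lt E0 (x := p + (n.+1%:R)^-1).
  rewrite ltrDl invr_gt0 ltr0n => /(_ isT) [q Eq qlt].
  apply: le_trans Eq; apply: le_measure; rewrite ?inE //; try exact: measurable_itv.
  move=> x; rewrite /F /= !in_itv /= !andbT; exact/le_trans/ltW.
have h1 := nondecreasing_cvg_mu (mu:=FS) mF (bigcup_measurable (fun n _ => mF n)) ndF.
have ndF' : nondecreasing_seq (FS \o F).
  by move=> m n mn; apply: le_measure; rewrite ?inE //; exact/subsetPset/ndF.
have e := cvg_unique (@ereal_hausdorff R) h1 (ereal_nondecreasing_cvgn ndF').
rewrite -cup e; apply: ge_ereal_sup => _ [n _ <-]; exact: Fle.
Qed.

Lemma mprod (R : realType) (g h : R -> R) :
  measurable_fun setT g -> measurable_fun setT h ->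
  measurable_fun [set: R * R] (fun z : R * R => g z.1 * h z.2).
Proof.
move=> mg mh; apply: measurable_funM.
- exact: measurableT_comp mg measurable_fst.
- exact: measurableT_comp mh measurable_snd.
Qed.

Arguments mprod {R g h}.
Arguments prod_sep {R} FS FB g h.

Theorem lemma12 (R : realType) (FS FB : probability R R) :
  nonneg_finite_mean FS -> nonneg_finite_mean FB ->
  (FB `]-oo, pstar FS]%classic <= (1 / 5 : R)%:E)%E ->
  (((17 / 25 : R)%:E * OPTW FS FB) <= W FS FB (pstar FS))%E.
Proof.
move=> [S0 _] _ hB.
have hS := @pstar_gt R FS.
set p := pstar FS in hS hB *.
have mI1 : measurable (`]-oo, p]%classic : set R) by exact: measurable_itv.
have mI2 : measurable (`]p, +oo[%classic : set R) by exact: measurable_itv.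
have mx0 : measurable_fun [set: R] (fun x : R => Num.max x 0).
  by apply: (measurable_funrpos (f := fun x : R => x)); exact: measurable_id.
have mbp : measurable_fun [set: R] (fun y : R => Num.max (y - p) 0).
  apply: (measurable_funrpos (f := fun y : R => y - p)).
  by apply: measurable_funB => //; exact: measurable_cst.
have mps : measurable_fun [set: R] (fun x : R => Num.max (p - x) 0).
  apply: (measurable_funrpos (f := fun x : R => p - x)).
  by apply: measurable_funB => //; exact: measurable_cst.
have m1 : measurable_fun [set: R] (fun _ : R => (1:R)) by exact: measurable_cst.
have mi1 : measurable_fun [set: R] (\1_(`]-oo, p]%classic) : R -> R).
  exact: measurable_indic.
have mi2 : measurable_fun [set: R] (\1_(`]p, +oo[%classic) : R -> R).
  exact: measurable_indic.
have aeP : forall f g : R * R -> \bar R, (forall z, 0 <= z.1 -> f z = g z) ->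
    ae_eq (FS \x FB)%E setT f g.
  move=> f g fg; exists (`]-oo, 0[%classic `*` setT); split.
  - by apply: measurableX => //; exact: measurable_itv.
  - transitivity (FS `]-oo, 0%R[%classic * FB setT)%E.
      by apply: product_measure1E => //; exact: measurable_itv.
    by rewrite S0 mul0e.
  - move=> z /= Hz; split => //=; rewrite in_itv /= ltNge; apply/negP => h.
    by apply: Hz => _; exact: fg.
have eb : (fun z : R * R => ((p < z.2) && (z.1 <= p))%:R : R) =
    (fun z => \1_(`]-oo, p]%classic) z.1 * \1_(`]p, +oo[%classic) z.2).
  by apply/funext => z; rewrite indI1 indI2; case: (z.1 <= p); case: (p < z.2); rewrite /= ?mulr1 ?mulr0.
have mw1 : measurable_fun [set: R * R] (fun z : R * R => (Num.max z.1 0 * 1)%:E).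
  apply/measurable_EFinP. exact: (mprod mx0 m1).
have mw2 : measurable_fun [set: R * R] (fun z : R * R =>
    (\1_(`]-oo, p]%classic) z.1 * Num.max (z.2 - p) 0)%:E).
  by apply/measurable_EFinP; exact: (mprod mi1 mbp).
have mw3 : measurable_fun [set: R * R] (fun z : R * R =>
    (Num.max (p - z.1) 0 * \1_(`]p, +oo[%classic) z.2)%:E).
  by apply/measurable_EFinP; exact: (mprod mps mi2).
have mw4 : measurable_fun [set: R * R] (fun z : R * R => (1 * Num.max (z.2 - p) 0)%:E).
  by apply/measurable_EFinP; exact: (mprod m1 mbp).
have mw5 : measurable_fun [set: R * R] (fun z : R * R => (Num.max (p - z.1) 0 * 1)%:E).
  by apply/measurable_EFinP; exact: (mprod mps m1).
have maxge0 : forall x : R, 0 <= Num.max x 0 by move=> x; rewrite le_max lexx orbT.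
have indge0 : forall (A : set R) x, 0 <= \1_A x :> R by move=> A x; rewrite indicE ler0n.
have wE : W FS FB p = (\int[FS \x FB]_(z in setT)
   ((Num.max z.1 0 * 1)%:E + (\1_(`]-oo, p]%classic) z.1 * Num.max (z.2 - p) 0)%:E
    + (Num.max (p - z.1) 0 * \1_(`]p, +oo[%classic) z.2)%:E))%E.
  rewrite /W; apply: ae_eq_integral => //.
  - apply/measurable_EFinP; apply: measurable_funD; first exact: measurable_fst.
    apply: measurable_funM.
      by apply: measurable_funB; [exact: measurable_snd | exact: measurable_fst].
    by rewrite eb; exact: mprod.
  - by apply: emeasurable_funD => //; exact: emeasurable_funD.
  - apply: aeP => z z0; rewrite -!EFinD; congr (_%:E); exact: identW.
have mopt : measurable_fun [set: R * R]
    (fun z : R * R => (Num.max z.2 (Num.max z.1 0))%:E).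
  apply/measurable_EFinP; apply: measurable_maxr; first exact: measurable_snd.
  exact: (measurableT_comp mx0 measurable_fst).
have optE : OPTW FS FB = (\int[FS \x FB]_(z in setT) (Num.max z.2 (Num.max z.1 0))%:E)%E.
  rewrite /OPTW; apply: ae_eq_integral => //.
  - apply/measurable_EFinP; apply: measurable_maxr;
      [exact: measurable_snd | exact: measurable_fst].
  - by apply: aeP => z z0; rewrite (max_idPl z0).
have optle : (OPTW FS FB <= \int[FS \x FB]_(z in setT)
   ((Num.max z.1 0 * 1)%:E + (1 * Num.max (z.2 - p) 0)%:E
    + (Num.max (p - z.1) 0 * 1)%:E))%E.
  rewrite optE; apply: ge0_le_integral => //.
  - move=> z _; rewrite lee_fin; apply: le_trans (maxge0 z.1) _.
    by rewrite le_max lexx orbT.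
  - by apply: emeasurable_funD => //; exact: emeasurable_funD.
  - by move=> z _; rewrite -!EFinD lee_fin; exact: identO.
rewrite ge0_integralD // in optle.
all: try (by move=> z _; rewrite -?EFinD lee_fin ?addr_ge0 ?mulr_ge0 ?maxge0 ?indge0 ?ler01).
all: try (by apply: emeasurable_funD).
rewrite ge0_integralD // in optle.
all: try (by move=> z _; rewrite -?EFinD lee_fin ?addr_ge0 ?mulr_ge0 ?maxge0 ?indge0 ?ler01).
all: try (by apply: emeasurable_funD).
rewrite wE ge0_integralD //.
all: try (by move=> z _; rewrite -?EFinD lee_fin ?addr_ge0 ?mulr_ge0 ?maxge0 ?indge0 ?ler01).
all: try (by apply: emeasurable_funD).
rewrite ge0_integralD //.
all: try (by move=> z _; rewrite -?EFinD lee_fin ?addr_ge0 ?mulr_ge0 ?maxge0 ?indge0 ?ler01).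
all: try (by apply: emeasurable_funD).
rewrite (prod_sep FS FB (fun x => Num.max x 0) (fun _ => 1)) // in optle.
rewrite (prod_sep FS FB (fun _ => 1) (fun y => Num.max (y - p) 0)) // in optle.
rewrite (prod_sep FS FB (fun x => Num.max (p - x) 0) (fun _ => 1)) // in optle.
rewrite (prod_sep FS FB (fun x => Num.max x 0) (fun _ => 1)) //.
rewrite (prod_sep FS FB (\1_(`]-oo, p]%classic)) (fun y => Num.max (y - p) 0)) //.
rewrite (prod_sep FS FB (fun x => Num.max (p - x) 0) (\1_(`]p, +oo[%classic))) //.
have i1 : forall P : probability R R, (\int[P]_(x in setT) (1 : R)%:E = 1)%E.
  by move=> P; rewrite integral_cst //= mul1e probability_setT.
rewrite !i1 in optle *.
rewrite !integral_indic // !setIT.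
have hfin : forall (P : probability R R) (A : set R), measurable A ->
    P A = (fine (P A))%:E.
  by move=> P A mA; rewrite fineK // fin_num_measure.
have ha : ((17 / 25 : R)%:E <= FS `]-oo, p]%classic)%E.
  rewrite -setCitvr probability_setC //.
  move: hS; rewrite (hfin _ _ mI2); set r := fine _.
  rewrite (_ : (1 - r%:E = (1 - r)%:E)%E) // !lee_fin; lra.
have hb : ((17 / 25 : R)%:E <= FB `]p, +oo[%classic)%E.
  rewrite -setCitvl probability_setC //.
  move: hB; rewrite (hfin _ _ mI1); set r := fine _.
  rewrite (_ : (1 - r%:E = (1 - r)%:E)%E) // !lee_fin; lra.
set A := (\int[FS]_x (Num.max x 0)%:E)%E in optle *.
set X := (\int[FB]_y (Num.max (y - p) 0)%:E)%E in optle *.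
set Y := (\int[FS]_x (Num.max (p - x) 0)%:E)%E in optle *.
have A0 : (0 <= A)%E by apply: integral_ge0 => x _; rewrite lee_fin.
have X0 : (0 <= X)%E by apply: integral_ge0 => x _; rewrite lee_fin.
have Y0 : (0 <= Y)%E by apply: integral_ge0 => x _; rewrite lee_fin.
have k0 : (0 <= (17 / 25 : R)%:E)%E by rewrite lee_fin divr_ge0.
clearbody A X Y.
apply: le_trans (lee_wpmul2l k0 optle) _.
rewrite !mule1 !mul1e !ge0_muleDr ?adde_ge0 //.
apply: leeD; first apply: leeD.
- rewrite -[leRHS]mul1e; apply: lee_pmul => //; rewrite lee_fin; lra.
- by apply: lee_pmul.
- by rewrite muleC; apply: lee_pmul.
Qed.
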